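(* Let $X$ be a Baire topological space, $Y$ a metric space and $\mathcal F\subseteq Y^X$. (1) If $\mathcal F$ is equi-GLP, then $\mathcal F$ is equi-cliquish. (2) If $X$ is a metric space and $\mathcal F$ is equi-Baire 1, then $\mathcal F$ is equi-cliquish.
   Context: A space is Baire if every nonempty open subset is nonmeager. A family of subsets of $X$ is discrete if each point has a neighborhood meeting at most one member; $\sigma$-discrete if it is a countable union of discrete families. $\mathcal F\subseteq Y^X$ (with $(Y,d)$ metric) is equi-GLP if for every $\varepsilon>0$ there is a $\sigma$-discrete family $\mathcal A_\varepsilon$ of closed subsets of $X$ with $X=\bigcup\mathcal A_\varepsilon$ and $\operatorname{diam}f(A)\le\varepsilon$ for all $A\in\mathcal A_\varepsilon$ and all $f\in\mathcal F$; equi-cliquish if for every $\varepsilon>0$ and every nonempty open $U\subseteq X$ there is a nonempty open $O\subseteq U$ with $\operatorname{diam}f(O)<\varepsilon$ for all $f\in\mathcal F$; for $X$ metric with metric $\rho$, equi-Baire 1 if for every $\varepsilon>0$ there is $\delta_\varepsilon\colon X\to(0,\infty)$ such that for all $x,y\in X$ and $f\in\mathcal F$, $\rho(x,y)<\min\{\delta_\varepsilon(x),\delta_\varepsilon(y)\}$ implies $d(f(x),f(y))<\varepsilon$. *)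

(* Defs.v *)
From HB Require Import structures.
From mathcomp Require Import all_boot all_order all_algebra.
From mathcomp Require Import all_classical all_reals all_analysis.
Set Implicit Arguments. Unset Strict Implicit. Unset Printing Implicit Defensive.
Import Order.TTheory GRing.Theory Num.Theory.
Local Open Scope classical_set_scope.
Local Open Scope ring_scope.

Definition nowhere_dense (X : topologicalType) (A : set X) : Prop :=
  interior (closure A) = set0.

Definition meager (X : topologicalType) (A : set X) : Prop :=
  exists N : (set X)^nat, (forall n, nowhere_dense (N n)) /\ A `<=` \bigcup_n N n.

Definition baire_space (X : topologicalType) : Prop :=
  forall U : set X, open U -> U !=set0 -> ~ meager U.

Definition discrete_family (X : topologicalType) (G : set (set X)) : Prop :=
  forall x : X, exists2 N : set X, nbhs x N &
    forall A B, G A -> G B -> N `&` A !=set0 -> N `&` B !=set0 -> A = B.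

Definition sigma_discrete (X : topologicalType) (G : set (set X)) : Prop :=
  exists H : nat -> set (set X), (forall n, discrete_family (H n)) /\
    G = \bigcup_n H n.

Definition diam_img {R : realType} (X : Type) (Y : metricType R)
    (f : X -> Y) (A : set X) : \bar R :=
  ereal_sup [set (mdist (f x) (f y))%:E | x in A & y in A].

Definition equi_GLP {R : realType} (X : topologicalType) (Y : metricType R)
    (F : set (X -> Y)) : Prop :=
  forall eps : R, 0 < eps ->
    exists AA : set (set X),
      [/\ sigma_discrete AA, (forall A, AA A -> closed A),
          \bigcup_(A in AA) A = setT &
          forall A f, AA A -> F f -> (diam_img f A <= eps%:E)%E].

Definition equi_cliquish {R : realType} (X : topologicalType) (Y : metricType R)
    (F : set (X -> Y)) : Prop :=
  forall eps : R, 0 < eps -> forall U : set X, open U -> U !=set0 ->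
    exists O : set X, [/\ open O, O !=set0, O `<=` U &
      forall f, F f -> (diam_img f O < eps%:E)%E].

Definition equi_baire1 {R : realType} (X Y : metricType R)
    (F : set (X -> Y)) : Prop :=
  forall eps : R, 0 < eps ->
    exists delta : X -> R, (forall x, 0 < delta x) /\
      forall x y f, F f -> mdist x y < Num.min (delta x) (delta y) ->
        mdist (f x) (f y) < eps.

(* Main.v *)
Require Import Defs.
From HB Require Import structures.
From mathcomp Require Import all_boot all_order all_algebra.
From mathcomp Require Import all_classical all_reals all_analysis.
From mathcomp Require Import lra.
Import Order.TTheory GRing.Theory Num.Theory.
Local Open Scope classical_set_scope.
Local Open Scope ring_scope.

Lemma baire_step (X : topologicalType) (U : set X) (S : nat -> set X) :
  baire_space X -> open U -> U !=set0 -> U `<=` \bigcup_n S n ->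
  exists n W, [/\ open W, W !=set0, W `<=` U & W `<=` closure (S n)].
Proof.
move=> hB oU nU cov.
have [//|H] := pselect (exists n W,
  [/\ open W, W !=set0, W `<=` U & W `<=` closure (S n)]).
exfalso; apply: (hB U oU nU).
exists (fun n => S n `&` U); split; last first.
  by move=> x Ux; have [n _ Sn] := cov x Ux; exists n => //.
move=> n; rewrite /nowhere_dense.
apply/seteqP; split => [v Vv|//].
apply: H; exists n, (interior (closure (S n `&` U)) `&` U); split.
- exact: openI (@open_interior _ _) oU.
- have Cv := interior_subset Vv.
  have nV : nbhs v (interior (closure (S n `&` U))).
    by apply: open_nbhs_nbhs; split; [exact: open_interior | exact: Vv].
  have [w [[Sw Uw] Vw]] := Cv _ nV.
  by exists w; split.
- by move=> y [].
- move=> y [/interior_subset Cy _]; apply: (closureS _ Cy).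
  by move=> z [].
Qed.

Lemma diam_le {R : realType} {X : Type} {Y : metricType R} (f : X -> Y)
  (O : set X) (c : R) :
  (forall x y, O x -> O y -> mdist (f x) (f y) <= c) ->
  (diam_img f O <= c%:E)%E.
Proof.
move=> H; apply: ge_ereal_sup => _ [x Ox [y Oy <-]].
by rewrite lee_fin; apply: H.
Qed.

Lemma diam_sub {R : realType} {X : Type} {Y : metricType R} (f : X -> Y)
  (O A : set X) : O `<=` A -> (diam_img f O <= diam_img f A)%E.
Proof.
move=> OA; apply: ereal_sup_le => _ [x Ox [y Oy <-]].
by exists x; [apply: OA | exists y => //; apply: OA].
Qed.

Theorem proposition3p6 (R : realType) :
  (forall (X : topologicalType) (Y : metricType R) (F : set (X -> Y)),
      baire_space X -> equi_GLP F -> equi_cliquish F) /\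
  (forall (X Y : metricType R) (F : set (X -> Y)),
      baire_space X -> equi_baire1 F -> equi_cliquish F).
Proof.
split.
- move=> X Y F hB hG eps e0 U oU nU.
  have e20 : 0 < eps / 2 by rewrite divr_gt0.
  have [AA [[H [Hd HE]] Hc Hcov Hdiam]] := hG (eps / 2) e20.
  pose S n := \bigcup_(A in H n) A.
  have cov : U `<=` \bigcup_n S n.
    move=> x _; have : (\bigcup_(A in AA) A) x by rewrite Hcov.
    case=> A; rewrite HE => -[n _ Hn] Ax.
    by exists n => //; exists A.
  have [n [W [oW [x Wx] WU WC]]] := @baire_step _ U S hB oU nU cov.
  have [N Nx HN] := Hd n x.
  have nW : nbhs x W by apply: open_nbhs_nbhs; split.
  have [y [[A0 HA0 A0y] [Ny Wy]]] := WC x Wx _ (filterI Nx nW).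
  have AAA0 : AA A0 by rewrite HE; exists n.
  have OA : interior N `&` W `<=` A0.
    move=> p [Np Wp]; rewrite ((closure_id A0).1 (Hc _ AAA0)).
    move=> B nB.
    have [q [[A HA Aq] [Bq Nq]]] := WC p Wp _ (filterI nB Np).
    have AA0 : A = A0.
      by apply: (HN A A0 HA HA0); [exists q | exists y].
    by exists q; split => //; rewrite -AA0.
  exists (interior N `&` W); split.
  + exact: openI (@open_interior _ _) oW.
  + by exists x.
  + by move=> p [_ /WU].
  + move=> f Ff; have h1 := @diam_sub _ _ _ f _ _ OA.
    have h2 := Hdiam _ _ AAA0 Ff.
    have h3 : ((eps / 2)%:E < eps%:E)%E by rewrite lte_fin; lra.
    exact: (le_lt_trans h1 (le_lt_trans h2 h3)).
- move=> X Y F hB hb eps e0 U oU nU.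
  have e40 : 0 < eps / 4 by rewrite divr_gt0.
  have [d [d0 hd]] := hb (eps / 4) e40.
  pose S n := [set x : X | n.+1%:R^-1 <= d x].
  have cov : U `<=` \bigcup_n S n.
    move=> x _.
    have [N _ HN] := near_infty_natSinv_lt (PosNum (d0 x)).
    exists N => //; apply: ltW; exact: (HN N (leqnn N)).
  have [n [W [oW [z Wz] WU WC]]] := @baire_step _ U S hB oU nU cov.
  pose c : R := n.+1%:R^-1.
  have c0 : 0 < c by rewrite invr_gt0.
  have nW : nbhs z W by apply: open_nbhs_nbhs; split.
  pose O := interior (ball z (c / 2) `&` W).
  have approx : forall x, O x -> exists e, [/\ S n e, mdist x e < d x &
      mdist z e < c / 2].
    move=> x Ox.
    have [Bx Wx] := interior_subset Ox.
    have [e [Se [de [be _]]]] := WC x Wx _ (filterI (nbhsx_ballx x (d x) (d0 x))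
       Ox).
    exists e; split => //; first by move: de; rewrite ballEmdist.
    by move: be; rewrite ballEmdist.
  have keyx : forall x f, F f -> O x -> exists e, S n e /\
      mdist (f x) (f e) < eps / 4 /\ mdist z e < c / 2.
    move=> x f Ff Ox; have [e [Se dxe dze]] := approx x Ox.
    exists e; split => //; split => //; apply: hd => //.
    have [Bx _] := interior_subset Ox.
    rewrite ballEmdist /= in Bx.
    have : mdist x e < c.
      apply: (le_lt_trans (metric_triangle x z e)).
      rewrite metric_sym; move: Bx dze => /=; lra.
    rewrite lt_min dxe /=; move=> h; apply: (lt_le_trans h); exact: Se.
  exists O; split.
  + exact: open_interior.
  + have c20 : 0 < c / 2 by rewrite divr_gt0.
    by exists z; exact: (filterI (nbhsx_ballx z _ c20) nW).
  + by move=> p /interior_subset [_ /WU].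
  + move=> f Ff; apply: (@le_lt_trans _ _ (eps * 3 / 4)%:E); last first.
      rewrite lte_fin; lra.
    apply: diam_le => x y Ox Oy.
    have [e [Se [fxe ze]]] := keyx x f Ff Ox.
    have [e' [Se' [fye ze']]] := keyx y f Ff Oy.
    have fee : mdist (f e) (f e') < eps / 4.
      apply: hd => //; rewrite lt_min.
      have : mdist e e' < c.
        apply: (le_lt_trans (metric_triangle e z e')).
        rewrite (metric_sym e z); move: ze ze'; lra.
      by move=> h; rewrite (lt_le_trans h Se) (lt_le_trans h Se').
    apply: (le_trans (metric_triangle (f x) (f e) (f y))).
    apply: (le_trans (lerD (lexx _) (metric_triangle (f e) (f e') (f y)))).
    rewrite (metric_sym (f e') (f y)); lra.
Qed.
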